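(* There is a constant $c$ such that for all positive integers $k,v$ there is a first-order formula $\alpha_k(g;x_1,\dots,x_k)$ in the language of monoids with $|\alpha_k|\le c(k+\log v)$ such that for every group $G$ with $|G|\le v$ and all $g,x_1,\dots,x_k\in G$: $G\models\alpha_k(g;x_1,\dots,x_k)$ if and only if $g\in\langle x_1,\dots,x_k\rangle$.
   Context: The length $|\phi|$ of a formula is its number of symbols, each variable counting as a single symbol. Here $\log m=\min\{r\in\mathbb N: 2^r\ge m\}$. $\langle x_1,\dots,x_k\rangle$ is the subgroup generated by $x_1,\dots,x_k$. *)

(* Defs.v *)
From mathcomp Require Import all_boot all_fingroup.
Set Implicit Arguments. Unset Strict Implicit. Unset Printing Implicit Defensive.

Inductive mterm : Type :=
  | TVar of nat
  | TOne
  | TMul of mterm & mterm.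

Inductive mformula : Type :=
  | FEq of mterm & mterm
  | FTrue
  | FFalse
  | FNot of mformula
  | FAnd of mformula & mformula
  | FOr of mformula & mformula
  | FImp of mformula & mformula
  | FEx of nat & mformula
  | FAll of nat & mformula.

(* Length = number of symbols (Polish/prefix notation, so no brackets);  *)
(* each variable occurrence counts as a single symbol, as does each     *)
(* operation, constant, relation, connective and quantifier symbol.     *)
Fixpoint tlen (t : mterm) : nat :=
  match t with
  | TVar _ => 1
  | TOne => 1
  | TMul t1 t2 => (tlen t1 + tlen t2).+1
  end.

Fixpoint flen (f : mformula) : nat :=
  match f with
  | FEq t1 t2 => (tlen t1 + tlen t2).+1
  | FTrue | FFalse => 1
  | FNot f1 => (flen f1).+1
  | FAnd f1 f2 | FOr f1 f2 | FImp f1 f2 => (flen f1 + flen f2).+1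
  | FEx _ f1 | FAll _ f1 => (flen f1).+2
  end.

Fixpoint teval (gT : finGroupType) (e : nat -> gT) (t : mterm) : gT :=
  match t with
  | TVar i => e i
  | TOne => 1%g
  | TMul t1 t2 => (teval e t1 * teval e t2)%g
  end.

Definition upd (gT : finGroupType) (e : nat -> gT) (i : nat) (a : gT) :=
  fun j => if j == i then a else e j.

Fixpoint holds (gT : finGroupType) (e : nat -> gT) (f : mformula) : Prop :=
  match f with
  | FEq t1 t2 => teval e t1 = teval e t2
  | FTrue => True
  | FFalse => False
  | FNot f1 => ~ holds e f1
  | FAnd f1 f2 => holds e f1 /\ holds e f2
  | FOr f1 f2 => holds e f1 \/ holds e f2
  | FImp f1 f2 => holds e f1 -> holds e f2
  | FEx i f1 => exists a : gT, holds (upd e i a) f1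
  | FAll i f1 => forall a : gT, holds (upd e i a) f1
  end.

(* Main.v *)
Require Import Defs.
From mathcomp Require Import all_boot all_fingroup.
From mathcomp Require Import zify.
Set Implicit Arguments. Unset Strict Implicit. Unset Printing Implicit Defensive.

Section Gen.
Variable gT : finGroupType.
Local Open Scope group_scope.

Lemma gen_expgs_ge (A : {set gT}) m : (#|gT| <= m)%N -> <<A>> = (1 |: A) ^+ m.
Proof.
move=> Hm.
set B := (1 |: A); pose N := #|gT|.
have BsubG n : B ^+ n \subset <<A>>.
  by elim: n => [|n IHn]; rewrite ?expgS ?mul_subG ?subUset ?sub1G ?subset_gen.
have B_1 n : 1 \in B ^+ n.
  by elim: n => [|n IHn]; rewrite ?set11 // expgS mulUg mul1g inE IHn.
case: (pickP (fun i : 'I_N => B ^+ i.+1 \subset B ^+ i)) => [n fixBn | no_fix].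
  have En : <<A>> = B ^+ n.
    apply/eqP; rewrite eqEsubset BsubG andbT.
    rewrite -[B ^+ n]gen_set_id ?genS ?subsetUr //.
      by apply: subset_trans fixBn; rewrite expgS mulUg subsetU ?mulg_subl ?orbT.
    rewrite /group_set B_1 /=.
    elim: {2}(n : nat) => [|m' IHm]; first by rewrite mulg1.
    by apply: subset_trans fixBn; rewrite !expgSr mulgA mulSg.
  apply/eqP; rewrite eqEsubset BsubG andbT En.
  have ltn : (n <= m)%N by apply: leq_trans (ltnW (ltn_ord n)) Hm.
  rewrite -(subnKC ltn) expgnDr.
  by rewrite -{1}[B ^+ n]mulg1 mulgS // sub1set B_1.
suffices: (N < #|B ^+ N|)%N by rewrite ltnNge max_card.
have [] := ubnPgeq N; elim=> [|n IHn] lt_nN; first by rewrite cards1.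
apply: leq_ltn_trans (IHn (ltnW lt_nN)) (proper_card _).
by rewrite /proper (no_fix (Ordinal lt_nN)) expgS mulUg mul1g subsetUl.
Qed.
End Gen.

Fixpoint disj (z n : nat) : mformula :=
  match n with
  | 0 => FEq (TVar z) TOne
  | n'.+1 => FOr (FEq (TVar z) (TVar n)) (disj z n')
  end.

Fixpoint phi (k r : nat) : mformula :=
  match r with
  | 0 => disj k.+1 k
  | r'.+1 => FEx k.+2 (FEx k.+3 (FAnd (FEq (TVar k.+1) (TMul (TVar k.+2) (TVar k.+3)))
       (FAll k.+1 (FImp (FOr (FEq (TVar k.+1) (TVar k.+2)) (FEq (TVar k.+1) (TVar k.+3)))
          (phi k r')))))
  end.

Lemma flen_disj z n : flen (disj z n) = 3 + 4 * n.
Proof. elim: n => [|n IH] //=. rewrite IH. lia. Qed.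

Lemma flen_phi k r : flen (phi k r) = 3 + 4 * k + 20 * r.
Proof. elim: r => [|r IH] /=; first by rewrite flen_disj; lia. rewrite IH. lia. Qed.

Lemma holds_disj (gT : finGroupType) (e : nat -> gT) z n :
  holds e (disj z n) <-> (e z = 1%g \/ exists j, (0 < j <= n)%N /\ e z = e j).
Proof.
elim: n => [|n IH] /=.
  split; [by left | case=> // [[j]]]; lia.
rewrite IH; split.
  case=> [H|[H|[j [Hj H]]]]; [right; exists n.+1; split=> //; lia|by left|].
  by right; exists j; split=> //; lia.
case=> [H|[j [Hj H]]]; [by right; left|].
case: (eqVneq j n.+1) => [Ej|Nj]; first by left; rewrite H Ej.
by right; right; exists j; split=> //; lia.
Qed.

Lemma holds_phi (gT : finGroupType) k (xs : k.-tuple gT) r (e : nat -> gT) :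
  (forall i : 'I_k, e i.+1 = tnth xs i) ->
  (holds e (phi k r) <-> e k.+1 \in ((1 |: [set x in (xs : seq gT)]) ^+ (2 ^ r))%g).
Proof.
elim: r e => [|r IH] e He /=.
  rewrite expn0 expg1 holds_disj !inE; split.
    case=> [->|[j [Hj ->]]]; first by rewrite eqxx.
    have Hj' : (j.-1 < k)%N by lia.
    have := He (Ordinal Hj'); rewrite /= prednK; last by lia.
    by move=> ->; rewrite mem_tnth orbT.
  case/orP=> [/eqP->|/tnthP[i ->]]; first by left.
  by right; exists i.+1; split; [have := ltn_ord i; lia | rewrite He].
have E2 : (2 ^ r.+1 = 2 ^ r + 2 ^ r)%N by rewrite expnS mul2n addnn.
have Ag : forall (e' : nat -> gT) j a, (k < j)%N -> (forall i : 'I_k, e' i.+1 = tnth xs i) ->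
    (forall i : 'I_k, upd e' j a i.+1 = tnth xs i).
  move=> e' j a Hj He' i; rewrite /upd ifN_eq ?He' //.
  by have := ltn_ord i; lia.
have n1 : (k.+2 == k.+1) = false by apply/negbTE; lia.
have n2 : (k.+3 == k.+1) = false by apply/negbTE; lia.
have n3 : (k.+1 == k.+2) = false by apply/negbTE; lia.
have n4 : (k.+1 == k.+3) = false by apply/negbTE; lia.
have n5 : (k.+2 == k.+3) = false by apply/negbTE; lia.
rewrite E2 expgnDr; split.
  case=> x [y [Heq Hall]].
  move: Heq; rewrite /= /upd !eqxx n3 n4 n5 => ->.
  have Ae : forall w, forall i : 'I_k, upd (upd (upd e k.+2 x) k.+3 y) k.+1 w i.+1 = tnth xs i.
    by move=> w; apply: (Ag); [lia|apply: (Ag); [lia|apply: (Ag); [lia|]]].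
  apply: mem_mulg.
  - have := (IH _ (Ae x)).1 (Hall x _).
    rewrite /upd /= ?eqxx; apply; left.
    by rewrite /upd /= ?eqxx ?n1 ?n2 ?n3 ?n4 ?n5.
  - have := (IH _ (Ae y)).1 (Hall y _).
    rewrite /upd /= ?eqxx; apply; right.
    by rewrite /upd /= ?eqxx ?n1 ?n2 ?n3 ?n4 ?n5.
case/mulsgP=> x y Hx Hy Exy.
exists x, y; split.
  by rewrite /= /upd /= ?eqxx ?n1 ?n2 ?n3 ?n4 ?n5.
have Ae : forall w, forall i : 'I_k, upd (upd (upd e k.+2 x) k.+3 y) k.+1 w i.+1 = tnth xs i.
  by move=> w; apply: (Ag); [lia|apply: (Ag); [lia|apply: (Ag); [lia|]]].
move=> w Hw; apply/(IH _ (Ae w)).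
move: Hw; rewrite /upd /= ?eqxx ?n1 ?n2 ?n3 ?n4 ?n5.
by case=> ->.
Qed.

(* log v = up_log 2 v = min {r | v <= 2^r}.                            *)
Theorem lemma2p4 :
  exists c : nat, forall k v : nat, 0 < k -> 0 < v ->
    exists alpha : mformula,
      flen alpha <= c * (k + up_log 2 v) /\
      forall (gT : finGroupType), #|gT| <= v ->
        forall (g : gT) (xs : k.-tuple gT) (e : nat -> gT),
          e 0 = g -> (forall i : 'I_k, e i.+1 = tnth xs i) ->
          (holds e alpha <-> g \in <<[set x in (xs : seq gT)]>>%g).
Proof.
exists 30 => k v kp vp.
exists (FEx k.+1 (FAnd (FEq (TVar k.+1) (TVar 0)) (phi k (up_log 2 v)))); split.
  rewrite /= flen_phi; lia.
move=> gT Hv g xs e E0 He.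
rewrite (gen_expgs_ge _ (leq_trans Hv (up_logP v (isT : (1 < 2)%N)))).
have Ae : forall w, forall i : 'I_k, upd e k.+1 w i.+1 = tnth xs i.
  move=> w i; rewrite /upd ifN_eq ?He //; have := ltn_ord i; lia.
have n0 : (0 == k.+1) = false by [].
split.
  case=> w [Hw Hphi].
  move: Hw; rewrite /= /upd eqxx n0 => Ew.
  by have := (holds_phi _ (Ae w)).1 Hphi; rewrite /upd eqxx Ew E0.
move=> Hg; exists g; split.
  by rewrite /= /upd eqxx n0 E0.
by apply/(holds_phi _ (Ae g)); rewrite /upd eqxx.
Qed.
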